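(* Let $P \subseteq \mathbb{R}^7$ be an associative $3$-plane. Then $\Theta(P) \cap \Lambda^2_7 = P\lrcorner\varphi := \{u\lrcorner\varphi : u \in P\}$.
   Context: Equip $\mathbb{R}^7$ with its standard inner product, orientation and basis. Let $\varphi = e_{123} - e_{167} - e_{527} - e_{563} - e_{415} - e_{426} - e_{437}$ ($e_{ijk} = e_i\wedge e_j\wedge e_k$), $\psi = \star\varphi = e_{4567} - e_{4523} - e_{4163} - e_{4127} - e_{2637} - e_{1537} - e_{1526}$, and define $\times$ by $\langle u \times v, w \rangle = \varphi(u,v,w)$. A $3$-dimensional subspace is associative if closed under $\times$. For $u,v$: $u\wedge v$ is the 2-form $(a,b)\mapsto \langle u,a\rangle\langle v,b\rangle - \langle u,b\rangle\langle v,a\rangle$; $u\lrcorner\varphi$ is the 2-form $(a,b)\mapsto \varphi(u,a,b)$; $\Psi_{uv}$ is the 2-form $(a,b)\mapsto\psi(u,v,a,b)$. $\Lambda^2_7 = \{u\lrcorner\varphi : u\in\mathbb{R}^7\}$. $\Theta(P) = \Lambda^2(P)\oplus\Psi(P)$ with $\Lambda^2(P) = \mathrm{Span}\{u\wedge v: u,v\in P\}$, $\Psi(P) = \mathrm{Span}\{\Psi_{uv} : u,v\in P\}$. *)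

(* Defs.v *)
(* R : realType (mathcomp-analysis reals); vectors of R^7 are
   row vectors 'rV[R]_7, subspaces are row spaces of matrices (mxalgebra),
   2-forms are identified with their (Gram) matrices W : 'M[R]_7, i.e.
   the 2-form (a,b) |-> \sum_(i,j) a_i W_ij b_j, W_ij = form(e_i, e_j). *)
From HB Require Import structures.
From mathcomp Require Import all_boot all_order all_algebra.
From mathcomp Require Import reals.
Set Implicit Arguments. Unset Strict Implicit. Unset Printing Implicit Defensive.
Import Order.TTheory GRing.Theory Num.Theory.
Local Open Scope ring_scope.

Section G2.
Variable R : realType.

(* coordinate with the paper's 1-based indexing: x_i = <x, e_i>, 1 <= i <= 7 *)
Definition coord (x : 'rV[R]_7) (i : nat) : R := x 0 (inord i.-1).

(* standard basis vector e_i, 0-based index *)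
Definition bvec (i : 'I_7) : 'rV[R]_7 := delta_mx 0 i.

Definition e3 (i j k : nat) (u v w : 'rV[R]_7) : R :=
  let xs := [:: u; v; w] in let id := [:: i; j; k] in
  \det (\matrix_(r < 3, c < 3) coord (nth 0 xs r) (nth 0%N id c)).

Definition e4 (i j k l : nat) (u v w x : 'rV[R]_7) : R :=
  let xs := [:: u; v; w; x] in let id := [:: i; j; k; l] in
  \det (\matrix_(r < 4, c < 4) coord (nth 0 xs r) (nth 0%N id c)).

Definition phi (u v w : 'rV[R]_7) : R :=
  e3 1 2 3 u v w - e3 1 6 7 u v w - e3 5 2 7 u v w - e3 5 6 3 u v w
  - e3 4 1 5 u v w - e3 4 2 6 u v w - e3 4 3 7 u v w.

Definition psi (u v w x : 'rV[R]_7) : R :=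
  e4 4 5 6 7 u v w x - e4 4 5 2 3 u v w x - e4 4 1 6 3 u v w x
  - e4 4 1 2 7 u v w x - e4 2 6 3 7 u v w x - e4 1 5 3 7 u v w x
  - e4 1 5 2 6 u v w x.

(* cross product: <u x v, w> = phi(u,v,w) *)
Definition cross (u v : 'rV[R]_7) : 'rV[R]_7 := \row_k phi u v (bvec k).

Definition assoc_plane (P : 'M[R]_7) : Prop :=
  \rank P = 3%N /\
  forall u v : 'rV[R]_7, (u <= P)%MS -> (v <= P)%MS -> (cross u v <= P)%MS.

Definition wedge2 (u v : 'rV[R]_7) : 'M[R]_7 :=
  \matrix_(i, j) (u 0 i * v 0 j - u 0 j * v 0 i).
Definition contr (u : 'rV[R]_7) : 'M[R]_7 :=
  \matrix_(i, j) phi u (bvec i) (bvec j).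
Definition PsiF (u v : 'rV[R]_7) : 'M[R]_7 :=
  \matrix_(i, j) psi u v (bvec i) (bvec j).

Definition in_span (S : 'M[R]_7 -> Prop) (W : 'M[R]_7) : Prop :=
  exists (n : nat) (c : 'I_n -> R) (X : 'I_n -> 'M[R]_7),
    (forall i, S (X i)) /\ W = \sum_(i < n) c i *: X i.

Definition Lambda2P (P : 'M[R]_7) : 'M[R]_7 -> Prop :=
  in_span (fun X => exists u v, [/\ (u <= P)%MS, (v <= P)%MS & X = wedge2 u v]).
Definition PsiP (P : 'M[R]_7) : 'M[R]_7 -> Prop :=
  in_span (fun X => exists u v, [/\ (u <= P)%MS, (v <= P)%MS & X = PsiF u v]).

Definition Theta (P : 'M[R]_7) (W : 'M[R]_7) : Prop :=
  exists A B, [/\ Lambda2P P A, PsiP P B & W = A + B].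

Definition Lambda27 (W : 'M[R]_7) : Prop := exists u : 'rV[R]_7, W = contr u.

End G2.

(* Main.v *)
Require Import Defs.
From HB Require Import structures.
From mathcomp Require Import all_boot all_order all_algebra.
From mathcomp Require Import reals.
From mathcomp Require Import ring.
Set Implicit Arguments. Unset Strict Implicit. Unset Printing Implicit Defensive.
Import Order.TTheory GRing.Theory Num.Theory.
Local Open Scope ring_scope.

Section Det.
Variable R : comNzRingType.

Lemma detS n (g : nat -> nat -> R) :
  \det (\matrix_(i < n.+1, j < n.+1) g i j) =
  \sum_(j < n.+1) g 0%N j * ((-1) ^+ j * \det (\matrix_(i < n, k < n) g i.+1 (bump j k))).
Proof.
rewrite (expand_det_row _ 0); apply: eq_bigr => j _.
rewrite /cofactor mxE add0n; congr (_ * (_ * \det _)).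
by apply/matrixP => i k; rewrite !mxE.
Qed.

Lemma matE n (A : 'M[R]_n.+1) : A = \matrix_(i < n.+1, j < n.+1) A (inord i) (inord j).
Proof. by apply/matrixP => i j; rewrite mxE !inord_val. Qed.

Local Notation "A `_ ( i , j )" := (A (inord i) (inord j)) (at level 3).

Lemma det2 (A : 'M[R]_2) : \det A = A`_(0,0) * A`_(1,1) - A`_(0,1) * A`_(1,0).
Proof.
rewrite {1}(matE A) (detS _ (fun i j => A (inord i) (inord j))).
rewrite !big_ord_recl big_ord0 /= !det_mx11 !mxE /bump /=.
ring.
Qed.

Lemma det3 (A : 'M[R]_3) : \det A =
   A`_(0,0) * (A`_(1,1) * A`_(2,2) - A`_(1,2) * A`_(2,1))
 - A`_(0,1) * (A`_(1,0) * A`_(2,2) - A`_(1,2) * A`_(2,0))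
 + A`_(0,2) * (A`_(1,0) * A`_(2,1) - A`_(1,1) * A`_(2,0)).
Proof.
rewrite {1}(matE A) (detS _ (fun i j => A (inord i) (inord j))).
rewrite !big_ord_recl big_ord0 /= !det2 !mxE /bump /= !inordK //=.
ring.
Qed.

Lemma det4 (A : 'M[R]_4) : \det A =
   A`_(0,0) * (A`_(1,1) * (A`_(2,2) * A`_(3,3) - A`_(2,3) * A`_(3,2))
             - A`_(1,2) * (A`_(2,1) * A`_(3,3) - A`_(2,3) * A`_(3,1))
             + A`_(1,3) * (A`_(2,1) * A`_(3,2) - A`_(2,2) * A`_(3,1)))
 - A`_(0,1) * (A`_(1,0) * (A`_(2,2) * A`_(3,3) - A`_(2,3) * A`_(3,2))
             - A`_(1,2) * (A`_(2,0) * A`_(3,3) - A`_(2,3) * A`_(3,0))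
             + A`_(1,3) * (A`_(2,0) * A`_(3,2) - A`_(2,2) * A`_(3,0)))
 + A`_(0,2) * (A`_(1,0) * (A`_(2,1) * A`_(3,3) - A`_(2,3) * A`_(3,1))
             - A`_(1,1) * (A`_(2,0) * A`_(3,3) - A`_(2,3) * A`_(3,0))
             + A`_(1,3) * (A`_(2,0) * A`_(3,1) - A`_(2,1) * A`_(3,0)))
 - A`_(0,3) * (A`_(1,0) * (A`_(2,1) * A`_(3,2) - A`_(2,2) * A`_(3,1))
             - A`_(1,1) * (A`_(2,0) * A`_(3,2) - A`_(2,2) * A`_(3,0))
             + A`_(1,2) * (A`_(2,0) * A`_(3,1) - A`_(2,1) * A`_(3,0))).
Proof.
rewrite {1}(matE A) (detS _ (fun i j => A (inord i) (inord j))).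
rewrite !big_ord_recl big_ord0 /= !det3 !mxE /bump /= !inordK //=.
ring.
Qed.
End Det.

Section Main.
Variable R : realType.
Implicit Types (a b c u v w x y : 'rV[R]_7).
Local Notation cd := (@Defs.coord R).

Lemma e3E i j k u v w : e3 i j k u v w =
  cd u i * (cd v j * cd w k - cd v k * cd w j)
- cd u j * (cd v i * cd w k - cd v k * cd w i)
+ cd u k * (cd v i * cd w j - cd v j * cd w i).
Proof. by rewrite /e3 det3 !mxE !inordK. Qed.

Lemma e4E i j k l u v w x : e4 i j k l u v w x =
   cd u i * (cd v j * (cd w k * cd x l - cd w l * cd x k)
             - cd v k * (cd w j * cd x l - cd w l * cd x j)
             + cd v l * (cd w j * cd x k - cd w k * cd x j))
 - cd u j * (cd v i * (cd w k * cd x l - cd w l * cd x k)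
             - cd v k * (cd w i * cd x l - cd w l * cd x i)
             + cd v l * (cd w i * cd x k - cd w k * cd x i))
 + cd u k * (cd v i * (cd w j * cd x l - cd w l * cd x j)
             - cd v j * (cd w i * cd x l - cd w l * cd x i)
             + cd v l * (cd w i * cd x j - cd w j * cd x i))
 - cd u l * (cd v i * (cd w j * cd x k - cd w k * cd x j)
             - cd v j * (cd w i * cd x k - cd w k * cd x i)
             + cd v k * (cd w i * cd x j - cd w j * cd x i)).
Proof. by rewrite /e4 det4 !mxE !inordK. Qed.

Lemma phiDl a b v w : phi (a + b) v w = phi a v w + phi b v w.
Proof. rewrite /phi !e3E /cd !mxE /=. ring. Qed.


Lemma phiZl (r : R) a v w : phi (r *: a) v w = r * phi a v w.
Proof. rewrite /phi !e3E /Defs.coord !mxE /=. ring. Qed.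
Lemma phiDm a b v w : phi v (a + b) w = phi v a w + phi v b w.
Proof. rewrite /phi !e3E /Defs.coord !mxE /=. ring. Qed.
Lemma phiZm (r : R) a v w : phi v (r *: a) w = r * phi v a w.
Proof. rewrite /phi !e3E /Defs.coord !mxE /=. ring. Qed.
Lemma phiDr a b v w : phi v w (a + b) = phi v w a + phi v w b.
Proof. rewrite /phi !e3E /Defs.coord !mxE /=. ring. Qed.
Lemma phiZr (r : R) a v w : phi v w (r *: a) = r * phi v w a.
Proof. rewrite /phi !e3E /Defs.coord !mxE /=. ring. Qed.
Lemma phi_alt a b c : phi a b c = - phi a c b.
Proof. rewrite /phi !e3E /Defs.coord /=. ring. Qed.
Lemma phi_cyc a b c : phi a b c = phi b c a.
Proof. rewrite /phi !e3E /Defs.coord /=. ring. Qed.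
Lemma psiD3 a b p q x : psi p q (a + b) x = psi p q a x + psi p q b x.
Proof. rewrite /psi !e4E /Defs.coord !mxE /=. ring. Qed.
Lemma psiZ3 (r : R) a p q x : psi p q (r *: a) x = r * psi p q a x.
Proof. rewrite /psi !e4E /Defs.coord !mxE /=. ring. Qed.
Lemma psiD4 a b p q x : psi p q x (a + b) = psi p q x a + psi p q x b.
Proof. rewrite /psi !e4E /Defs.coord !mxE /=. ring. Qed.
Lemma psiZ4 (r : R) a p q x : psi p q x (r *: a) = r * psi p q x a.
Proof. rewrite /psi !e4E /Defs.coord !mxE /=. ring. Qed.

End Main.


Section Main2.
Variable R : realType.
Implicit Types (a b c u v w x y : 'rV[R]_7).
Local Notation cd := (@Defs.coord R).
Definition dot a b : R := \sum_(k < 7) a 0 k * b 0 k.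

Lemma dotC a b : dot a b = dot b a.
Proof. by apply: eq_bigr => k _; rewrite mulrC. Qed.
Lemma dotDl a b c : dot (a + b) c = dot a c + dot b c.
Proof. by rewrite /dot -big_split; apply: eq_bigr => k _; rewrite mxE mulrDl. Qed.
Lemma dotZl r a c : dot (r *: a) c = r * dot a c.
Proof. by rewrite /dot mulr_sumr; apply: eq_bigr => k _; rewrite mxE mulrA. Qed.
Lemma dotDr a b c : dot c (a + b) = dot c a + dot c b.
Proof. by rewrite dotC dotDl !(dotC c). Qed.
Lemma dotZr r a c : dot c (r *: a) = r * dot c a.
Proof. by rewrite dotC dotZl dotC. Qed.

Lemma lin_expand (g : 'rV[R]_7 -> R) :
  (forall a b, g (a + b) = g a + g b) -> (forall r a, g (r *: a) = r * g a) ->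
  forall x, g x = \sum_(k < 7) x 0 k * g (bvec R k).
Proof.
move=> gD gZ x.
have g0 : g 0 = 0 by have := gZ 0 0; rewrite scale0r mul0r.
rewrite {1}(row_sum_delta x) (big_morph g gD g0).
by apply: eq_bigr => k _; rewrite gZ.
Qed.

Lemma dot_bvec a k : dot a (bvec R k) = a 0 k.
Proof.
rewrite /dot (bigD1 k) //= big1.
  by rewrite /bvec mxE !eqxx mulr1 addr0.
by move=> j /negbTE jk; rewrite /bvec mxE jk andbF mulr0.
Qed.

Lemma dot_cross a b c : dot (cross a b) c = phi a b c.
Proof.
rewrite (@lin_expand (phi a b) (fun x y => phiDr x y a b) (fun r x => phiZr r x a b) c) /dot.
by apply: eq_bigr => k _; rewrite /cross mxE mulrC.
Qed.

Lemma row_eq a b : (forall c, dot a c = dot b c) -> a = b.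
Proof. by move=> h; apply/rowP => k; rewrite -!dot_bvec. Qed.

Lemma sum7 (f : 'I_7 -> R) : \sum_(k < 7) f k =
  f (inord 0) + f (inord 1) + f (inord 2) + f (inord 3) + f (inord 4) + f (inord 5) + f (inord 6).
Proof.
rewrite (eq_bigr (fun k : 'I_7 => f (inord k))) => [|k _]; last by rewrite inord_val.
rewrite -(big_mkord xpredT (fun k => f (inord k))).
do 7 rewrite big_ltn //; rewrite big_geq //. rewrite /=. ring.
Qed.

Lemma inord_eq7 j k : (j < 7)%N -> (k < 7)%N -> (inord j == inord k :> 'I_7) = (j == k).
Proof.
move=> hj hk; apply/eqP/eqP => [h|->//].
by have := congr1 (@nat_of_ord 7) h; rewrite !inordK.
Qed.

Lemma crossE a b k : cross a b 0 k = phi a b (bvec R k).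
Proof. by rewrite mxE. Qed.
Lemma bvec_same k : (k < 7)%N -> bvec R (inord k) 0 (inord k) = 1.
Proof. by move=> _; rewrite mxE !eqxx. Qed.
Lemma bvec_diff k j : (k < 7)%N -> (j < 7)%N -> k != j -> bvec R (inord k) 0 (inord j) = 0.
Proof. by move=> hk hj kj; rewrite mxE inord_eq7 // eq_sym (negbTE kj) andbF. Qed.

Lemma cross1 a b : cd (cross a b) 1 = (cd a 2 * cd b 3 - cd a 3 * cd b 2) + (cd a 4 * cd b 5 - cd a 5 * cd b 4) - (cd a 6 * cd b 7 - cd a 7 * cd b 6).
Proof. by rewrite /Defs.coord crossE /phi !e3E /Defs.coord /= ?bvec_same // ?bvec_diff //; ring. Qed.
Lemma cross2 a b : cd (cross a b) 2 = - (cd a 1 * cd b 3 - cd a 3 * cd b 1) + (cd a 4 * cd b 6 - cd a 6 * cd b 4) + (cd a 5 * cd b 7 - cd a 7 * cd b 5).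
Proof. by rewrite /Defs.coord crossE /phi !e3E /Defs.coord /= ?bvec_same // ?bvec_diff //; ring. Qed.
Lemma cross3 a b : cd (cross a b) 3 = (cd a 1 * cd b 2 - cd a 2 * cd b 1) + (cd a 4 * cd b 7 - cd a 7 * cd b 4) - (cd a 5 * cd b 6 - cd a 6 * cd b 5).
Proof. by rewrite /Defs.coord crossE /phi !e3E /Defs.coord /= ?bvec_same // ?bvec_diff //; ring. Qed.
Lemma cross4 a b : cd (cross a b) 4 = - (cd a 1 * cd b 5 - cd a 5 * cd b 1) - (cd a 2 * cd b 6 - cd a 6 * cd b 2) - (cd a 3 * cd b 7 - cd a 7 * cd b 3).
Proof. by rewrite /Defs.coord crossE /phi !e3E /Defs.coord /= ?bvec_same // ?bvec_diff //; ring. Qed.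
Lemma cross5 a b : cd (cross a b) 5 = (cd a 1 * cd b 4 - cd a 4 * cd b 1) - (cd a 2 * cd b 7 - cd a 7 * cd b 2) + (cd a 3 * cd b 6 - cd a 6 * cd b 3).
Proof. by rewrite /Defs.coord crossE /phi !e3E /Defs.coord /= ?bvec_same // ?bvec_diff //; ring. Qed.
Lemma cross6 a b : cd (cross a b) 6 = (cd a 1 * cd b 7 - cd a 7 * cd b 1) + (cd a 2 * cd b 4 - cd a 4 * cd b 2) - (cd a 3 * cd b 5 - cd a 5 * cd b 3).
Proof. by rewrite /Defs.coord crossE /phi !e3E /Defs.coord /= ?bvec_same // ?bvec_diff //; ring. Qed.
Lemma cross7 a b : cd (cross a b) 7 = - (cd a 1 * cd b 6 - cd a 6 * cd b 1) + (cd a 2 * cd b 5 - cd a 5 * cd b 2) + (cd a 3 * cd b 4 - cd a 4 * cd b 3).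
Proof. by rewrite /Defs.coord crossE /phi !e3E /Defs.coord /= ?bvec_same // ?bvec_diff //; ring. Qed.

Definition crossN := (cross1, cross2, cross3, cross4, cross5, cross6, cross7).

Lemma dot7 a b : dot a b = cd a 1 * cd b 1 + cd a 2 * cd b 2 + cd a 3 * cd b 3
  + cd a 4 * cd b 4 + cd a 5 * cd b 5 + cd a 6 * cd b 6 + cd a 7 * cd b 7.
Proof. by rewrite /dot sum7. Qed.

Ltac expand := rewrite ?dot7; unfold phi, psi; rewrite ?e3E ?e4E ?crossN.

Lemma I3 v w c : phi v (cross v w) c = - dot v v * dot w c + dot v w * dot v c.
Proof. expand. ring. Qed.

Lemma P7 a x m : phi a x (cross x m) = - dot x x * dot m a + dot x m * dot x a.
Proof. expand. ring. Qed.

Lemma I2 a b x y : phi (cross a b) x y = dot a x * dot b y - dot a y * dot b x - psi a b x y.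
Proof. expand. ring. Qed.

Lemma I1 p q x m : psi p q x m = phi p (cross q x) m + dot p q * dot x m - dot p x * dot q m.
Proof. expand. ring. Qed.
End Main2.


Section Main3.
Variable R : realType.
Implicit Types (a b c u v w x y : 'rV[R]_7).

Definition Fm (M : 'M[R]_7) x y : R := \sum_(i < 7) \sum_(j < 7) x 0 i * M i j * y 0 j.

Lemma sum_delta (f : 'I_7 -> R) j : \sum_(k < 7) bvec R j 0 k * f k = f j.
Proof.
rewrite (bigD1 j) //= big1.
  by rewrite /bvec mxE !eqxx mul1r addr0.
by move=> k /negbTE jk; rewrite /bvec mxE jk andbF mul0r.
Qed.

Lemma Fm_bvec M i j : Fm M (bvec R i) (bvec R j) = M i j.
Proof.
rewrite /Fm (eq_bigr (fun k => bvec R i 0 k * (\sum_(l < 7) bvec R j 0 l * M k l))).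
  by rewrite sum_delta sum_delta.
move=> k _; rewrite mulr_sumr; apply: eq_bigr => l _; ring.
Qed.

Lemma Fm_ext M N : (forall x y, Fm M x y = Fm N x y) -> M = N.
Proof. by move=> h; apply/matrixP => i j; rewrite -!Fm_bvec. Qed.

Lemma Fm_add M N x y : Fm (M + N) x y = Fm M x y + Fm N x y.
Proof.
rewrite /Fm -big_split; apply: eq_bigr => i _; rewrite -big_split.
by apply: eq_bigr => j _; rewrite mxE mulrDr mulrDl.
Qed.

Lemma Fm_scale (r : R) M x y : Fm (r *: M) x y = r * Fm M x y.
Proof.
rewrite /Fm mulr_sumr; apply: eq_bigr => i _; rewrite mulr_sumr.
by apply: eq_bigr => j _; rewrite mxE; ring.
Qed.

Lemma Fm_0 x y : Fm 0 x y = 0.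
Proof. by have := Fm_scale 0 0 x y; rewrite scale0r mul0r. Qed.

Lemma Fm_span n (c : 'I_n -> R) (X : 'I_n -> 'M[R]_7) x y :
  Fm (\sum_(i < n) c i *: X i) x y = \sum_(i < n) c i * Fm (X i) x y.
Proof.
rewrite (big_morph (fun M => Fm M x y) (fun M N => Fm_add M N x y) (Fm_0 x y)).
by apply: eq_bigr => i _; rewrite Fm_scale.
Qed.

Lemma Fm_bilin (f : 'rV[R]_7 -> 'rV[R]_7 -> R) :
  (forall a b c, f (a + b) c = f a c + f b c) ->
  (forall r a c, f (r *: a) c = r * f a c) ->
  (forall c a b, f c (a + b) = f c a + f c b) ->
  (forall c r a, f c (r *: a) = r * f c a) ->
  forall x y, Fm (\matrix_(i, j) f (bvec R i) (bvec R j)) x y = f x y.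
Proof.
move=> hD1 hZ1 hD2 hZ2 x y.
rewrite (@lin_expand R (fun a => f a y) (fun a b => hD1 a b y) (fun r a => hZ1 r a y) x) /Fm.
apply: eq_bigr => i _.
rewrite (@lin_expand R (f (bvec R i)) (hD2 _) (hZ2 _) y) mulr_sumr.
by apply: eq_bigr => j _; rewrite mxE; ring.
Qed.

Lemma Fm_contr u x y : Fm (contr u) x y = phi u x y.
Proof.
apply: Fm_bilin => *; by rewrite ?phiDm ?phiZm ?phiDr ?phiZr.
Qed.

Lemma Fm_PsiF p q x y : Fm (PsiF p q) x y = psi p q x y.
Proof.
apply: Fm_bilin => *; by rewrite ?psiD3 ?psiZ3 ?psiD4 ?psiZ4.
Qed.

Lemma Fm_wedge a b x y : Fm (wedge2 a b) x y = dot a x * dot b y - dot a y * dot b x.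
Proof.
have -> : wedge2 a b = \matrix_(i, j) (dot a (bvec R i) * dot b (bvec R j)
                                       - dot a (bvec R j) * dot b (bvec R i)).
  by apply/matrixP => i j; rewrite !mxE !dot_bvec.
apply: (Fm_bilin (f := fun x y => dot a x * dot b y - dot a y * dot b x)) => *;
  rewrite ?dotDr ?dotZr; ring.
Qed.

Lemma contr_scale (r : R) u : contr (r *: u) = r *: contr u.
Proof. by apply: Fm_ext => x y; rewrite Fm_scale !Fm_contr phiZl. Qed.

Lemma contr0 : contr (0 : 'rV[R]_7) = 0.
Proof. by rewrite -(scale0r (0 : 'rV[R]_7)) contr_scale scale0r. Qed.

Lemma contr_cross a b : contr (cross a b) = wedge2 a b + (-1) *: PsiF a b.
Proof.
apply: Fm_ext => x y; rewrite Fm_add Fm_scale Fm_contr Fm_wedge Fm_PsiF I2; ring.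
Qed.

Lemma I3v v w : cross v (cross v w) = - dot v v *: w + dot v w *: v.
Proof.
apply: (@row_eq R) => c; rewrite dotDl !dotZl dot_cross I3 //.
Qed.

Lemma dot_self_eq0 x : dot x x = 0 -> x = 0.
Proof.
move=> h; apply/rowP => k; rewrite [RHS]mxE.
have hge : forall i : 'I_7, xpredT i -> 0 <= x 0 i * x 0 i.
  by move=> i _; rewrite -expr2 sqr_ge0.
have := @psumr_eq0P _ _ xpredT (fun k => x 0 k * x 0 k) hge h k isT.
by move/eqP; rewrite -expr2 sqrf_eq0 => /eqP.
Qed.

Lemma dot_coker (C : 'M[R]_7) p j : dot p (col j C)^T = (p *m C) 0 j.
Proof. by rewrite /dot mxE; apply: eq_bigr => k _; rewrite !mxE. Qed.

End Main3.

Theorem lemma4p9 (R : realType) (P : 'M[R]_7) :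
  assoc_plane P ->
  forall W : 'M[R]_7,
    (Theta P W /\ Lambda27 W) <-> exists2 u : 'rV[R]_7, (u <= P)%MS & W = contr u.
Proof.
move=> [rkP crossP] W; split.
- case=> [[A [B [hA hB ->]]] [u hu]]; exists u => //.
  have key : forall x m, (x <= P)%MS -> (forall p, (p <= P)%MS -> dot p m = 0) ->
      phi u x m = 0.
    move=> x m xP hm; rewrite -Fm_contr -hu Fm_add.
    case: hA => [n [c [X [hX ->]]]]; case: hB => [n' [d [Y [hY ->]]]].
    rewrite !Fm_span !big1 ?addr0 // => i _.
      have [p [q [pP qP ->]]] := hY i.
      rewrite Fm_PsiF I1 -dot_cross !hm ?crossP //.
      ring.
    have [a [b [aP bP ->]]] := hX i.
    rewrite Fm_wedge !hm //; ring.
  have [x xP x0] : exists2 x : 'rV[R]_7, (x <= P)%MS & x != 0.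
    case: (boolP [exists i, row i P != 0]) => [/existsP [i hi]|/existsPn h].
      by exists (row i P); rewrite ?row_sub.
    have P0 : P = 0 by apply/row_matrixP => i; rewrite row0; apply/eqP/negPn/h.
    by move: rkP; rewrite P0 mxrank0.
  have xx0 : dot x x != 0 by apply: contra x0 => /eqP /dot_self_eq0 ->.
  rewrite submxE; apply/eqP/rowP => j; rewrite [RHS]mxE.
  set n := (col j (cokermx P))^T.
  have hn : forall p, (p <= P)%MS -> dot p n = 0.
    move=> p /submxP [D ->]; rewrite dot_coker -mulmxA mulmx_coker mulmx0.
    by rewrite mxE.
  have hm : forall p, (p <= P)%MS -> dot p (cross x n) = 0.
    move=> p pP; rewrite dotC dot_cross phi_alt -dot_cross hn ?oppr0 //.
    exact: crossP.
  have := key _ _ xP hm; rewrite P7 (hn x xP) mul0r addr0 mulNr.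
  move/eqP; rewrite oppr_eq0 mulf_eq0 (negbTE xx0) /= => /eqP.
  by rewrite dotC dot_coker.
- case=> u uP ->; split; last by exists u.
  case: (eqVneq u 0) => [->|u0].
    rewrite contr0; exists 0, 0; split; last by rewrite addr0.
      by exists 0%N, (fun _ => 0), (fun _ => 0); split; [case | rewrite big_ord0].
    by exists 0%N, (fun _ => 0), (fun _ => 0); split; [case | rewrite big_ord0].
  have [i ri] : exists i, ~~ (row i P <= u)%MS.
    apply/row_subPn; apply/negP => /mxrankS; rewrite rkP.
    by move/leq_trans/(_ (rank_leq_row u)).
  set r := row i P.
  have rP : (r <= P)%MS by rewrite row_sub.
  set v := dot u u *: r + (- dot r u) *: u.
  have vP : (v <= P)%MS by rewrite addmx_sub ?scalemx_sub.
  have uu0 : dot u u != 0 by apply: contra u0 => /eqP /dot_self_eq0 ->.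
  have v0 : v != 0.
    apply: contra ri => /eqP hv.
    rewrite -/r; have -> : r = ((dot u u)^-1 * dot r u) *: u.
      apply: (scalerI uu0); rewrite scalerA mulrA divff // mul1r.
      by apply/eqP; rewrite -subr_eq0 -scaleNr; apply/eqP.
    by rewrite scalemx_sub ?submx_refl.
  have vu : dot v u = 0 by rewrite dotDl !dotZl; ring.
  have vv0 : dot v v != 0 by apply: contra v0 => /eqP /dot_self_eq0 ->.
  set y := cross v u.
  have yP : (y <= P)%MS by apply: crossP.
  set k := - (dot v v)^-1.
  have hu : u = k *: cross v y.
    rewrite /y I3v vu scale0r addr0 scalerA /k mulNr mulrN opprK mulVf //.
    by rewrite scale1r.
  exists (k *: wedge2 v y), ((- k) *: PsiF v y); split.
  + exists 1%N, (fun _ => k), (fun _ => wedge2 v y); split; last by rewrite big_ord1.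
    by move=> _; exists v, y.
  + exists 1%N, (fun _ => - k), (fun _ => PsiF v y); split; last by rewrite big_ord1.
    by move=> _; exists v, y.
  + rewrite {1}hu contr_scale contr_cross scalerDr scalerA mulrN1.
    by [].
Qed.
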